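(* Let $\Sigma$ be a set and let $A\in\mathrm{Abs}(\wp(\Sigma))$ be given by the Galois insertion $(\alpha,\wp(\Sigma),A,\gamma)$. The following are equivalent: (1) $A$ is partitioning; (2) $\gamma$ is additive and $\{\gamma(\alpha(\{s\}))\}_{s\in\Sigma}$ is a partition of $\Sigma$ (and in this case $\mathrm{par}(A)=\{\gamma(\alpha(\{s\}))\}_{s\in\Sigma}$); (3) $A$ is forward complete for the complement operator $\complement:\wp(\Sigma)\to\wp(\Sigma)$, $\complement(S)=\Sigma\setminus S$.
   Context: An abstract domain of $\wp(\Sigma)_\subseteq$ is a complete lattice $A$ with a Galois insertion $(\alpha,\wp(\Sigma),A,\gamma)$: monotone maps with $\alpha(S)\le_A a\iff S\subseteq\gamma(a)$ and $\alpha\circ\gamma=\mathrm{id}$; its closure is $\mu_A=\gamma\circ\alpha$, and domains are identified when their closures coincide ($\mathrm{Abs}(\wp(\Sigma))$). $\gamma$ is additive if it preserves arbitrary joins (unions). For a partition $P$ of $\Sigma$, $\mathrm{pad}(P)$ is the abstract domain whose closure is $S\mapsto\bigcup\{B\in P\mid B\cap S\ne\varnothing\}$; $A$ is partitioning if $\mu_A=\mathrm{pad}(P)$'s closure for some partition $P$. $\mathrm{par}(A)$ is the partition of $\Sigma$ into the classes of $s\equiv_A s'\iff\alpha(\{s\})=\alpha(\{s'\})$. $A$ is forward complete for a unary $f$ if $f\circ\mu_A=\mu_A\circ f\circ\mu_A$. *)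

(* Defs.v *)
From mathcomp Require Import all_boot.
From mathcomp Require Import boolp classical_sets.
Set Implicit Arguments. Unset Strict Implicit. Unset Printing Implicit Defensive.
Local Open Scope classical_set_scope.

Definition is_lub (A : Type) (le : A -> A -> Prop) (X : set A) (a : A) : Prop :=
  (forall x, X x -> le x a) /\ (forall b, (forall x, X x -> le x b) -> le a b).

Record galois_insertion (Sigma A : Type) := GaloisInsertion {
  le : A -> A -> Prop;
  le_refl : forall a, le a a;
  le_antisym : forall a b, le a b -> le b a -> a = b;
  le_trans : forall a b c, le a b -> le b c -> le a c;
  le_complete : forall X : set A, exists a, is_lub le X a;
  alpha : set Sigma -> A;
  gamma : A -> set Sigma;
  alpha_mono : forall S T, S `<=` T -> le (alpha S) (alpha T);
  gamma_mono : forall a b, le a b -> gamma a `<=` gamma b;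
  galois : forall S a, le (alpha S) a <-> S `<=` gamma a;
  insertion : forall a, alpha (gamma a) = a
}.

Section Defs.
Context (Sigma A : Type) (G : galois_insertion Sigma A).

Definition mu (S : set Sigma) : set Sigma := gamma G (alpha G S).

Definition gamma_additive : Prop :=
  forall (X : set A) (a : A), is_lub (le G) X a ->
    gamma G a = \bigcup_(x in X) gamma G x.

Definition forward_complete (f : set Sigma -> set Sigma) : Prop :=
  forall S, f (mu S) = mu (f (mu S)).

Definition par : set (set Sigma) :=
  [set C | exists s, C = [set s' | alpha G [set s'] = alpha G [set s]]].
End Defs.

Definition is_partition (Sigma : Type) (P : set (set Sigma)) : Prop :=
  (forall B, P B -> B !=set0) /\
  (forall B C, P B -> P C -> B `&` C !=set0 -> B = C) /\
  \bigcup_(B in P) B = setT.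

(* closure of pad(P): S |-> U { B in P | B meets S } *)
Definition pad_closure (Sigma : Type) (P : set (set Sigma)) (S : set Sigma)
  : set Sigma :=
  \bigcup_(B in [set B | P B /\ B `&` S !=set0]) B.

Definition partitioning (Sigma A : Type) (G : galois_insertion Sigma A) : Prop :=
  exists P : set (set Sigma), is_partition P /\
    forall S, mu G S = pad_closure P S.

(* Main.v *)
Require Import Defs.
From mathcomp Require Import all_boot.
From mathcomp Require Import boolp classical_sets.
Local Open Scope classical_set_scope.

Lemma mu_ext {Sigma A : Type} (G : galois_insertion Sigma A) S : S `<=` mu G S.
Proof. rewrite /mu; apply/galois; exact: le_refl. Qed.

Lemma mu_mono {Sigma A : Type} (G : galois_insertion Sigma A) S T :
  S `<=` T -> mu G S `<=` mu G T.
Proof. by move=> ST; apply: gamma_mono; apply: alpha_mono. Qed.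

Lemma mu_idem {Sigma A : Type} (G : galois_insertion Sigma A) S :
  mu G (mu G S) = mu G S.
Proof. by rewrite /mu insertion. Qed.

Lemma mu_least {Sigma A : Type} (G : galois_insertion Sigma A) S F :
  S `<=` F -> mu G F = F -> mu G S `<=` F.
Proof. by move=> SF <-; apply: mu_mono. Qed.

Definition Uprop {Sigma A : Type} (G : galois_insertion Sigma A) :=
  forall S, mu G S = \bigcup_(s in S) mu G [set s].
Definition Sprop {Sigma A : Type} (G : galois_insertion Sigma A) :=
  forall s u, mu G [set s] u -> mu G [set u] s.

Lemma blk_eq {Sigma A : Type} (G : galois_insertion Sigma A) s u :
  Sprop G -> mu G [set s] u -> mu G [set s] = mu G [set u].
Proof.
move=> Sy hu; apply/seteqP; split.
- apply: mu_least; last exact: mu_idem.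
  by move=> x ->; apply: Sy.
- apply: mu_least; last exact: mu_idem.
  by move=> x ->.
Qed.

Lemma US_part {Sigma A : Type} (G : galois_insertion Sigma A) :
  Uprop G -> Sprop G ->
  is_partition (range (fun s : Sigma => mu G [set s])) /\
  forall S, mu G S = pad_closure (range (fun s : Sigma => mu G [set s])) S.
Proof.
move=> U Sy; split; first split.
- by move=> B [s _ <-]; exists s; apply: mu_ext.
- split.
  + move=> B C [s _ <-] [t _ <-] [u [h1 h2]].
    by rewrite (blk_eq _ _ _ Sy h1) (blk_eq _ _ _ Sy h2).
  + apply/seteqP; split => // x _; exists (mu G [set x]); first by exists x.
    exact: mu_ext.
- move=> S; apply/seteqP; split => x.
  + rewrite U => -[s Ss hx]; exists (mu G [set s]) => //; split; first by exists s.
    by exists s; split => //; apply: mu_ext.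
  + move=> [B [[t _ <-] [s [hs Ss]]] hx].
    rewrite U; exists s => //; by rewrite -(blk_eq _ _ _ Sy hs).
Qed.

Lemma part_US {Sigma A : Type} (G : galois_insertion Sigma A) :
  partitioning G -> Uprop G /\ Sprop G.
Proof.
move=> [P [HP Hmu]]; split.
- move=> S; apply/seteqP; split => x.
  + rewrite Hmu /pad_closure => -[B [PB [s [Bs Ss]]] Bx]; exists s => //.
    rewrite Hmu /pad_closure; exists B => //; split => //; by exists s.
  + move=> [s Ss]; rewrite !Hmu /pad_closure => -[B [PB [t [Bt ht]]] Bx].
    exists B => //; split => //; exists t; split => //; by rewrite ht.
- move=> s u; rewrite !Hmu /pad_closure => -[B [PB [t [Bt ht]]] Bx].
  exists B; last by rewrite -ht.
  split => //; exists u; split => //.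
Qed.

Lemma US_fc {Sigma A : Type} (G : galois_insertion Sigma A) :
  Uprop G -> Sprop G -> forward_complete G (fun S => ~` S).
Proof.
move=> U Sy S; apply/seteqP; split; first exact: mu_ext.
move=> x; rewrite [in X in X -> _]U => -[s Ss hx] hxS.
apply: Ss; rewrite U in hxS; case: hxS => t Tt hxt.
have hsx := Sy _ _ hx.
have : mu G [set t] s by rewrite (blk_eq _ _ _ Sy hxt).
by apply: (@mu_mono _ _ G [set t] S) => // y ->.
Qed.

Lemma fc_S {Sigma A : Type} (G : galois_insertion Sigma A) :
  forward_complete G (fun S => ~` S) -> Sprop G.
Proof.
move=> fc s u hu; case: (pselect (mu G [set u] s)) => // hn.
exfalso.
have hfix : mu G (~` mu G [set u]) = ~` mu G [set u] by rewrite -fc.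
have : mu G [set s] `<=` ~` mu G [set u].
  by apply: mu_least => // y ->.
by move/(_ u hu); apply; apply: mu_ext.
Qed.

Lemma fc_U {Sigma A : Type} (G : galois_insertion Sigma A) :
  forward_complete G (fun S => ~` S) -> Uprop G.
Proof.
move=> fc S; have Sy := fc_S _ fc.
apply/seteqP; split => x; last first.
  by case=> s Ss hx; apply: (@mu_mono _ _ G [set s] S) => // y ->.
move=> hx; case: (pselect ((\bigcup_(s in S) mu G [set s]) x)) => // hn.
exfalso.
have hfix : mu G (~` mu G [set x]) = ~` mu G [set x] by rewrite -fc.
have : S `<=` ~` mu G [set x].
  move=> s Ss hs; apply: hn; exists s => //; exact: Sy.
move/(mu_least G) => /(_ hfix) /(_ x hx); apply; exact: mu_ext.
Qed.

Lemma U_add {Sigma A : Type} (G : galois_insertion Sigma A) :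
  Uprop G -> gamma_additive G.
Proof.
move=> U X a [aub alub].
set V := \bigcup_(x in X) gamma G x.
have hV : mu G V = V.
  apply/seteqP; split; last exact: mu_ext.
  rewrite U => y [z [x Xx hz] hy]; exists x => //.
  have : mu G [set z] `<=` mu G (gamma G x) by apply: mu_mono => w ->.
  by rewrite /mu insertion => /(_ y hy).
have ub : forall x, X x -> le G x (alpha G V).
  move=> x Xx; rewrite -(insertion G x); apply: alpha_mono => y hy.
  by exists x.
have lst : forall b, (forall x, X x -> le G x b) -> le G (alpha G V) b.
  move=> b hb; apply/galois => y [x Xx hy].
  exact: (gamma_mono (hb x Xx)).
have -> : a = alpha G V.
  by apply: le_antisym; [apply: alub | apply: lst].
exact: hV.
Qed.

Lemma add_U {Sigma A : Type} (G : galois_insertion Sigma A) :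
  gamma_additive G -> Uprop G.
Proof.
move=> ad S.
have hl : is_lub (le G) [set alpha G [set s] | s in S] (alpha G S).
  split.
  - by move=> x [s Ss <-]; apply: alpha_mono => y ->.
  - move=> b hb; apply/galois => s Ss.
    have : le G (alpha G [set s]) b by apply: hb; exists s.
    by move/galois; apply.
rewrite /mu (ad _ _ hl); apply/seteqP; split => x.
- by case=> _ [s Ss <-] hx; exists s.
- by case=> s Ss hx; exists (alpha G [set s]) => //; exists s.
Qed.

Lemma part_S {Sigma A : Type} (G : galois_insertion Sigma A) :
  is_partition (range (fun s : Sigma => gamma G (alpha G [set s]))) -> Sprop G.
Proof.
move=> [_ [disj _]] s u hu.
have e : mu G [set s] = mu G [set u].
  apply: disj; [by exists s | by exists u | exists u; split => //].
  exact: mu_ext.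
rewrite -e; exact: mu_ext.
Qed.

Lemma par_eq {Sigma A : Type} (G : galois_insertion Sigma A) :
  Sprop G -> par G = range (fun s : Sigma => gamma G (alpha G [set s])).
Proof.
move=> Sy.
have key : forall s, [set s' | alpha G [set s'] = alpha G [set s]] = mu G [set s].
  move=> s; apply/seteqP; split => s'.
  - move=> /= e; rewrite /mu -e; exact: mu_ext.
  - move=> hs /=; have := blk_eq _ _ _ Sy hs; rewrite /mu => e.
    by rewrite -(insertion G (alpha G [set s'])) -e insertion.
apply/seteqP; split => C.
- by case=> s ->; rewrite key; exists s.
- by case=> s _ <-; exists s; rewrite key.
Qed.

Theorem corollary3p2 (Sigma A : Type) (G : galois_insertion Sigma A) :
  let cond2 := gamma_additive G /\
               is_partition (range (fun s : Sigma => gamma G (alpha G [set s]))) in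
  (partitioning G <-> cond2) /\
  (partitioning G <-> forward_complete G (fun S => ~` S)) /\
  (cond2 -> par G = range (fun s : Sigma => gamma G (alpha G [set s]))).
Proof.
move=> cond2.
have US_P : Uprop G -> Sprop G -> partitioning G.
  move=> U Sy; have [h1 h2] := US_part _ U Sy.
  by exists (range (fun s : Sigma => mu G [set s])).
have H1 : partitioning G -> cond2.
  move=> hp; have [U Sy] := part_US _ hp; split; first exact: U_add.
  exact: (US_part _ U Sy).1.
have H2 : cond2 -> partitioning G.
  by move=> [ad hp]; apply: US_P; [exact: add_U | exact: part_S].
split; first by split.
split; last by move=> [_ hp]; apply: par_eq; exact: part_S.
split.
- by move=> hp; have [U Sy] := part_US _ hp; exact: US_fc.
- by move=> fc; apply: US_P; [exact: fc_U | exact: fc_S].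
Qed.
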